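(* Let $G$ be a looped simple graph, $S$ a subtransversal of $W(G)$, and $\nu\ge 0$ an integer. Then $\nu$ equals the nullity $|S|-r(S)$ of $S$ in $M[IAS(G)]$ if and only if there exist a looped simple graph $H$ locally equivalent to $G$, a stable set $X\subseteq V(H)$ with $|X|=\nu$, and an induced isomorphism $\beta:M[IAS(G)]\to M[IAS(H)]$ such that $$\bigcup_{x\in X}\zeta_H(x)\subseteq\beta(S)\subseteq\{\phi_H(v):v\in V(H)\setminus X\}\cup\bigcup_{x\in X}\zeta_H(x).$$
   Context: A looped simple graph is a finite graph in which each vertex carries at most one loop and no two distinct vertices are joined by more than one edge. ''Adjacent''/''neighbors'' refer only to distinct vertices joined by a non-loop edge; $N_G(v)$ is the set of neighbors of $v$; a stable set is a set of vertices no two of which are adjacent. $A(G)$ is the $V(G)\times V(G)$ matrix over $GF(2)$ with diagonal entry $1$ exactly at looped vertices and off-diagonal entry $1$ exactly for adjacent pairs. $IAS(G)=(I\mid A(G)\mid A(G)+I)$ over $GF(2)$, rows indexed by $V(G)$; the $v$-columns of the three blocks are labelled $\phi_G(v),\chi_G(v),\psi_G(v)$. $M[IAS(G)]$ is the binary column matroid of $IAS(G)$ on $W(G)=\{\phi_G(v),\chi_G(v),\psi_G(v):v\in V(G)\}$, with rank function $r$. The vertex triple of $v$ is $\tau_G(v)=\{\phi_G(v),\chi_G(v),\psi_G(v)\}$; a subtransversal meets each vertex triple in at most one element. Neighborhood circuit: $\zeta_G(v)=\{\chi_G(v)\}\cup\{\phi_G(w):w\in N_G(v)\}$ if $v$ is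 unlooped, and $\{\psi_G(v)\}\cup\{\phi_G(w):w\in N_G(v)\}$ if $v$ is looped. Local equivalence: $G_\ell^v$ complements the loop status of $v$; $G_s^v$ complements the adjacency status of every pair of distinct neighbors of $v$; $G_{ns}^v$ does this and also complements the loop status of every neighbor of $v$. $H$ is locally equivalent to $G$ if obtained from $G$ by a finite sequence of such operations. Induced isomorphisms: for each such operation producing $G'$ from $G$ there is a matroid isomorphism $M[IAS(G)]\to M[IAS(G')]$ sending $\alpha_G(x)\mapsto\alpha_{G'}(x)$ for all $\alpha\in\{\phi,\chi,\psi\}$, $x\in V(G)$, except: for $G'=G_\ell^v$, $\chi_G(v)\mapsto\psi_{G'}(v)$, $\psi_G(v)\mapsto\chi_{G'}(v)$; for $G'=G_{ns}^v$ with $v$ unlooped, $\phi_G(v)\mapsto\psi_{G'}(v)$, $\psi_G(v)\mapsto\phi_{G'}(v)$, and with $v$ looped, $\phi_G(v)\mapsto\chi_{G'}(v)$, $\chi_G(v)\mapsto\phi_{G'}(v)$; for $G'=G_s^v$, the same exchange at $v$ as for $G_{ns}^v$ and in addition, for every $w\in N_G(v)$, $\chi_G(w)\mapsto\psi_{G'}(w)$, $\psi_G(w)\mapsto\chi_{G'}(w)$. An induced isomorphism $M[IAS(G)]\to M[IAS(H)]$ is a composition of such isomorphisms along a sequence of operations transforming $G$ into $H$. *)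

(* Defs.v *)
From HB Require Import structures.
From mathcomp Require Import all_boot all_order all_algebra.
Set Implicit Arguments. Unset Strict Implicit. Unset Printing Implicit Defensive.
Import GRing.Theory.
Local Open Scope ring_scope.

Record lgraph (V : finType) := LGraph {
  ladj : rel V;
  lloop : pred V;
  ladj_sym : symmetric ladj;
  ladj_irr : irreflexive ladj }.

Section Graphs.
Variable V : finType.
Implicit Types (G : lgraph V) (v : V).

Definition nbhd G v : {set V} := [set w | ladj G v w].

Definition stable G (X : {set V}) : Prop :=
  forall x y, x \in X -> y \in X -> ~~ ladj G x y.

Definition loc_l v G : lgraph V :=
  @LGraph V (ladj G) (fun x => lloop G x (+) (x == v)) (@ladj_sym _ G) (@ladj_irr _ G).

Definition sadj v G : rel V :=
  fun x y => ladj G x y (+) [&& x != y, ladj G v x & ladj G v y].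

Lemma sadj_sym v G : symmetric (sadj v G).
Proof. by move=> x y; rewrite /sadj (ladj_sym G x y) (eq_sym x y) (andbC (ladj G v x)). Qed.

Lemma sadj_irr v G : irreflexive (sadj v G).
Proof. by move=> x; rewrite /sadj ladj_irr eqxx. Qed.

Definition loc_s v G : lgraph V :=
  @LGraph V (sadj v G) (lloop G) (@sadj_sym v G) (@sadj_irr v G).

Definition loc_ns v G : lgraph V :=
  @LGraph V (sadj v G) (fun x => lloop G x (+) ladj G v x) (@sadj_sym v G) (@sadj_irr v G).

End Graphs.

Inductive kind := Phi | Chi | Psi.
Definition kind2o (k : kind) : 'I_3 :=
  match k with Phi => inord 0 | Chi => inord 1 | Psi => inord 2 end.
Definition o2kind (i : 'I_3) : kind :=
  match val i with 0 => Phi | 1 => Chi | _ => Psi end.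
Lemma kind2oK : cancel kind2o o2kind.
Proof. by case; rewrite /o2kind /= inordK. Qed.
HB.instance Definition _ := Finite.copy kind (can_type kind2oK).

(* W(G) = V x {phi,chi,psi}: (k, v) stands for k_G(v). *)
Definition elt (V : finType) := (kind * V)%type.

Section Matroid.
Variable V : finType.
Implicit Types (G : lgraph V) (v : V).

(* the column of IAS(G) labelled by w, as a function of the row index u *)
Definition IAScol G (w : elt V) (u : V) : 'F_2 :=
  let: (k, v) := w in
  match k with
  | Phi => (u == v)%:R
  | Chi => (if u == v then lloop G v else ladj G u v)%:R
  | Psi => (if u == v then ~~ lloop G v else ladj G u v)%:R
  end.

Definition indep G (T : {set elt V}) : bool :=
  [forall c : {ffun elt V -> 'F_2},
    [forall w, (w \notin T) ==> (c w == 0)] ==>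
    [forall u, \sum_w c w * IAScol G w u == 0] ==>
    [forall w, c w == 0]].

Definition mrank G (S : {set elt V}) : nat :=
  (\max_(T : {set elt V} | (T \subset S) && indep G T) #|T|)%N.

Definition nullity G (S : {set elt V}) : nat := (#|S| - mrank G S)%N.

Definition subtransversal (S : {set elt V}) : Prop :=
  forall v, (#|[set w in S | w.2 == v]| <= 1)%N.

Definition zeta G v : {set elt V} :=
  (if lloop G v then (Psi, v) else (Chi, v)) |: [set (Phi, w) | w in nbhd G v].

Inductive locop := Oloop | Os | Ons.

Definition apply_op (o : locop) v G : lgraph V :=
  match o with Oloop => loc_l v G | Os => loc_s v G | Ons => loc_ns v G end.

Definition apply_ops G (s : seq (locop * V)) : lgraph V :=
  foldl (fun H ov => apply_op ov.1 ov.2 H) G s.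

Definition swap_at (k1 k2 : kind) v (w : elt V) : elt V :=
  if w.2 == v then
    (if w.1 == k1 then (k2, v) else if w.1 == k2 then (k1, v) else w)
  else w.

Definition ns_exch G v : elt V -> elt V :=
  if lloop G v then swap_at Phi Chi v else swap_at Phi Psi v.

Definition step_iso (o : locop) v G (w : elt V) : elt V :=
  match o with
  | Oloop => swap_at Chi Psi v w
  | Ons => ns_exch G v w
  | Os => if w.2 \in nbhd G v then swap_at Chi Psi w.2 w else ns_exch G v w
  end.

Fixpoint induced_iso G (s : seq (locop * V)) : elt V -> elt V :=
  match s with
  | [::] => id
  | (o, v) :: s' => fun w => induced_iso (apply_op o v G) s' (step_iso o v G w)
  end.

End Matroid.

(* Main.v *)
Require Import Defs.
From HB Require Import structures.
From mathcomp Require Import all_boot all_order all_algebra.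
Set Implicit Arguments. Unset Strict Implicit. Unset Printing Implicit Defensive.
Import GRing.Theory.
Local Open Scope ring_scope.

Lemma F2_add (a b : bool) : (a%:R + b%:R : 'F_2) = (a (+) b)%:R.
Proof. by case: a; case: b; rewrite ?addr0 ?add0r //; apply/val_inj. Qed.
Lemma F2_mul (a b : bool) : (a%:R * b%:R : 'F_2) = (a && b)%:R.
Proof. by case: a; case: b; rewrite ?mulr0 ?mul0r ?mulr1. Qed.

Section S.
Variable V : finType.
Implicit Types (G H : lgraph V).

Definition keqb (a b : kind) : bool :=
  match a, b with Phi,Phi|Chi,Chi|Psi,Psi => true | _, _ => false end.
Lemma kind_eqE (a b : kind) : (a == b) = keqb a b.
Proof. by case: a; case: b => //=; rewrite ?eqxx //; apply/eqP. Qed.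

Definition colb G (w : elt V) (u : V) : bool :=
  let: (k, v) := w in
  match k with
  | Phi => (u == v)
  | Chi => (if u == v then lloop G v else ladj G u v)
  | Psi => (if u == v then ~~ lloop G v else ladj G u v)
  end.

Lemma IAScolE G w u : IAScol G w u = (colb G w u)%:R.
Proof. by case: w => [[] x]. Qed.

Definition kk (o : locop) G v (u : V) : bool :=
  match o with Oloop => false | _ => ladj G v u end.

Lemma ladjxx G x : ladj G x x = false. Proof. exact: ladj_irr. Qed.
Ltac lsym := repeat match goal with |- context [ladj ?G ?a ?b] => match goal with |- context [ladj G b a] => rewrite (ladj_sym G a b) end end.
Ltac simp := rewrite /= ?/sadj /= ?kind_eqE /= ?eqxx /= ?ladjxx /= ?addbF ?andbF ?andbT; lsym.
Ltac neqs := repeat match goal with H : is_true (?a != ?b) |- _ =>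
   rewrite ?(negbTE H) ?(eq_sym b a) ?(negbTE H); revert H end; intros.
Ltac reqs := repeat match goal with
  | H : (?a = true) |- context [?a] => rewrite H
  | H : (?a = false) |- context [?a] => rewrite H
  | H : (ladj ?G ?a ?b = _) |- context [ladj ?G ?b ?a] => rewrite (ladj_sym G b a) H
  end.
Ltac bstep := simp; neqs; reqs; simp; neqs; reqs; simp.
Ltac bcl := bstep; repeat (let E := fresh "E" in first [case E: (lloop _ _) | case E: (ladj _ _ _)]; bstep); by [].

Lemma step_lin o v G w u :
  colb (apply_op o v G) (step_iso o v G w) u =
  colb G w u (+) (kk o G v u && colb G w v).
Proof.
case: w => k x.
case: o; case: k; rewrite /= /step_iso /ns_exch /swap_at /nbhd ?inE /=;
case: (eqVneq x v) => [?|nxv]; subst;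
case: (eqVneq u v) => [?|nuv]; subst; try (case: (eqVneq u x) => [?|nux]; subst).
all: bcl.
Qed.


Lemma swap_snd k1 k2 v (w : elt V) : (swap_at k1 k2 v w).2 = w.2.
Proof.
case: w => k x; rewrite /swap_at /=; case: (eqVneq x v) => [->|] //=.
by case: ifP => //; case: ifP.
Qed.

Lemma swap_inv k1 k2 v : k1 != k2 -> involutive (@swap_at V k1 k2 v).
Proof.
move=> nk [k x]; case: (eqVneq x v) => [->|nx]; last by rewrite /swap_at /= (negbTE nx) /= (negbTE nx).
have nk' : k2 != k1 by rewrite eq_sym.
case: (eqVneq k k1) => [->|nk1]; [|case: (eqVneq k k2) => [->|nk2]];
 rewrite /swap_at /= !eqxx /= ?(negbTE nk1) ?(negbTE nk2) /= ?eqxx ?(negbTE nk1) ?(negbTE nk2) ?(negbTE nk') ?(negbTE nk) ?eqxx //.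
Qed.

Lemma step_snd o v G w : (step_iso o v G w).2 = w.2.
Proof.
case: o; rewrite /step_iso /ns_exch ?swap_snd //; try case: ifP; rewrite ?swap_snd //;
try case: ifP; rewrite ?swap_snd //.
Qed.

Lemma ns_snd G v w : (ns_exch G v w).2 = w.2.
Proof. by rewrite /ns_exch; case: (lloop G v); rewrite swap_snd. Qed.

Lemma ns_inv G v : involutive (ns_exch G v).
Proof. by move=> w; rewrite /ns_exch; case: (lloop G v); rewrite swap_inv // kind_eqE. Qed.

Lemma step_inv o v G : involutive (step_iso o v G).
Proof.
move=> w; case: o; rewrite /step_iso.
- by rewrite swap_inv // kind_eqE.
- case Hw: (w.2 \in nbhd G v).
  + by rewrite swap_snd Hw swap_inv // kind_eqE.
  + by rewrite ns_snd Hw ns_inv.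
- by rewrite ns_inv.
Qed.

Definition sig G (c : elt V -> 'F_2) (u : V) : 'F_2 := \sum_w c w * IAScol G w u.

Lemma indepP G (T : {set elt V}) : reflect (forall c : {ffun elt V -> 'F_2},
   (forall w, w \notin T -> c w = 0) -> (forall u, sig G c u = 0) -> forall w, c w = 0)
  (indep G T).
Proof.
apply: (iffP forallP) => H.
- move=> c Hs Hz w.
  move: (H c) => /implyP H1.
  have H2 : [forall w, (w \notin T) ==> (c w == 0)].
    by apply/forallP => w'; apply/implyP => /Hs ->.
  move: (H1 H2) => /implyP H3.
  have H4 : [forall u, \sum_w c w * IAScol G w u == 0].
    by apply/forallP => u; rewrite -/(sig G c u) Hz.
  by move: (H3 H4) => /forallP /(_ w) /eqP.
- move=> c; apply/implyP => /forallP Hs; apply/implyP => /forallP Hz.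
  apply/forallP => w; apply/eqP; apply: H w.
  + by move=> w /(implyP (Hs w)) /eqP.
  + by move=> u; apply/eqP; exact: Hz.
Qed.

Lemma indep_iso G G' (b : elt V -> elt V) (k : V -> 'F_2) v :
  involutive b -> k v = 0 ->
  (forall w u, IAScol G' (b w) u = IAScol G w u + k u * IAScol G w v) ->
  forall T : {set elt V}, indep G' (b @: T) = indep G T.
Proof.
move=> bK kv Hcol T.
have binj : injective b := inv_inj bK.
have key : forall c : {ffun elt V -> 'F_2}, forall u,
    sig G' c u = sig G (fun w => c (b w)) u + k u * sig G (fun w => c (b w)) v.
  move=> c u; rewrite /sig (reindex_inj binj) /=.
  rewrite mulr_sumr -big_split /=; apply: eq_bigr => w _.
  by rewrite Hcol mulrDr mulrCA.
have memb : forall w, (b w \in b @: T) = (w \in T) by move=> w; rewrite mem_imset.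
apply/indepP/indepP => H c Hs Hz.
- pose c' := [ffun w => c (b w)].
  have Hs' : forall w, w \notin b @: T -> c' w = 0.
    by move=> w; rewrite -{1}(bK w) memb ffunE => /Hs.
  have Hz' : forall u, sig G' c' u = 0.
    move=> u; rewrite key.
    have E : forall x, sig G (fun w => c' (b w)) x = sig G c x.
      by move=> x; rewrite /sig; apply: eq_bigr => w _; rewrite ffunE bK.
    by rewrite !E !Hz mulr0 addr0.
  by move=> w; move: (H c' Hs' Hz' (b w)); rewrite ffunE bK.
- pose c' := [ffun w => c (b w)].
  have Hs' : forall w, w \notin T -> c' w = 0.
    by move=> w; rewrite -memb ffunE => /Hs.
  have E : forall x, sig G (fun w => c (b w)) x = sig G c' x.
    by move=> x; rewrite /sig; apply: eq_bigr => w _; rewrite ffunE.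
  have Hv : sig G c' v = 0 by move: (Hz v); rewrite key kv mul0r addr0 E.
  have Hz' : forall u, sig G c' u = 0.
    by move=> u; move: (Hz u); rewrite key !E Hv mulr0 addr0.
  by move=> w; rewrite -(bK w); move: (H c' Hs' Hz' (b w)); rewrite ffunE.
Qed.

Lemma step_indep o v G (T : {set elt V}) :
  indep (apply_op o v G) (step_iso o v G @: T) = indep G T.
Proof.
apply: (@indep_iso G (apply_op o v G) (step_iso o v G) (fun u => (kk o G v u)%:R) v).
- exact: step_inv.
- by case: o => //=; rewrite ladjxx.
- by move=> w u; rewrite !IAScolE step_lin -F2_add -F2_mul.
Qed.

Lemma imset_invol (b : elt V -> elt V) (T : {set elt V}) : involutive b -> b @: (b @: T) = T.
Proof.
move=> bK; rewrite -imset_comp.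
have -> : [set (b \o b) x | x in T] = [set id x | x in T] by apply: eq_imset => x /=; rewrite bK.
by rewrite imset_id.
Qed.

Lemma nullity_iso G G' (b : elt V -> elt V) (S : {set elt V}) :
  involutive b -> (forall T : {set elt V}, indep G' (b @: T) = indep G T) ->
  nullity G' (b @: S) = nullity G S.
Proof.
move=> bK Hind; rewrite /nullity /mrank card_imset; last exact: inv_inj.
congr (_ - _)%N.
have hinj : injective (fun T : {set elt V} => b @: T).
  by move=> T1 T2 E; rewrite -(imset_invol T1 bK) E imset_invol.
rewrite (reindex_inj hinj) /=.
apply: eq_big => [T|T _]; last by rewrite card_imset //; exact: inv_inj.
rewrite Hind; congr (_ && _).
apply/idP/idP; first by move/(imsetS b); rewrite !imset_invol.
exact: imsetS.
Qed.

Lemma nullity_ops G (s : seq (locop * V)) (S : {set elt V}) :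
  nullity (apply_ops G s) (induced_iso G s @: S) = nullity G S.
Proof.
elim: s G S => [|[o v] s IH] G S /=; first by rewrite imset_id.
rewrite /apply_ops /= -/(apply_ops (apply_op o v G) s).
have -> : [set induced_iso (apply_op o v G) s (step_iso o v G x) | x in S] =
   induced_iso (apply_op o v G) s @: (step_iso o v G @: S) by rewrite -imset_comp.
rewrite IH; apply: nullity_iso; first exact: step_inv.
exact: step_indep.
Qed.

Lemma indep_card G (T : {set elt V}) (Y : {set V}) :
  indep G T -> (forall w u, w \in T -> u \notin Y -> IAScol G w u = 0) -> (#|T| <= #|Y|)%N.
Proof.
move=> Hind HY.
pose M : 'M['F_2]_(#|T|, #|Y|) := \matrix_(i, j) IAScol G (enum_val i) (enum_val j).
suff : row_free M by rewrite /row_free => /eqP <-; exact: rank_leq_col.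
rewrite -kermx_eq0; apply/negPn/negP => /rowV0Pn [r /sub_kermxP Hr nz].
pose c := [ffun w => \sum_i r 0 i * (enum_val i == w)%:R].
have Hsum : forall u, sig G c u = \sum_i r 0 i * IAScol G (enum_val i) u.
  move=> u; rewrite /sig.
  rewrite (eq_bigr (fun w => \sum_i r 0 i * (enum_val i == w)%:R * IAScol G w u)); last first.
    by move=> w _; rewrite ffunE mulr_suml.
  rewrite exchange_big /=; apply: eq_bigr => i _.
  rewrite (bigD1 (enum_val i)) //= eqxx mulr1 big1 ?addr0 // => w /negbTE.
  by rewrite eq_sym => ->; rewrite mulr0 mul0r.
have Hs : forall w, w \notin T -> c w = 0.
  move=> w wT; rewrite ffunE big1 // => i _.
  have : enum_val i \in T := enum_valP i.
  by case: (eqVneq (enum_val i) w) => [->|]; [rewrite (negbTE wT)| rewrite mulr0].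
have Hz : forall u, sig G c u = 0.
  move=> u; rewrite Hsum; case: (boolP (u \in Y)) => uY; last first.
    by rewrite big1 // => i _; rewrite HY ?mulr0 // enum_valP.
  move/matrixP/(_ 0 (enum_rank_in uY u)): Hr.
  rewrite !mxE => H0; apply: (etrans _ H0); apply: eq_bigr => i _; rewrite !mxE enum_rankK_in //.
have c0 := (indepP _ _ Hind) c Hs Hz.
move/negP: nz; apply; apply/eqP/rowP => i; rewrite mxE.
move: (c0 (enum_val i)); rewrite ffunE (bigD1 i) //= eqxx mulr1 big1 ?addr0 //.
move=> j /negbTE nji; case: (eqVneq (enum_val j) (enum_val i)) => [/enum_val_inj E|].
  by rewrite E eqxx in nji.
by move=> _; rewrite mulr0.
Qed.

Definition ck G u : kind := if lloop G u then Psi else Chi.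
Definition nck G u : kind := if lloop G u then Chi else Psi.

Lemma zetaE G x : zeta G x = (ck G x, x) |: [set (Phi, w) | w in nbhd G x].
Proof. by rewrite /zeta /ck; case: lloop. Qed.

Lemma ck_neq G u : (ck G u == Phi) = false.
Proof. by rewrite /ck; case: lloop; rewrite kind_eqE. Qed.

Lemma col_ck G u : IAScol G (ck G u, u) u = 0.
Proof. by rewrite IAScolE /ck; case E: (lloop G u); rewrite /= eqxx E. Qed.

Lemma indep_phi G (T : {set elt V}) : (forall w, w \in T -> w.1 = Phi) -> indep G T.
Proof.
move=> HT; apply/indepP => c Hs Hz.
have cnp : forall w, w.1 != Phi -> c w = 0.
  move=> w nw; apply: Hs; apply/negP => /HT E; by rewrite E eqxx in nw.
have cp : forall u, c (Phi, u) = 0.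
  move=> u; move: (Hz u); rewrite /sig (bigD1 (Phi, u)) //= eqxx mulr1 big1 ?addr0 //.
  move=> [k v] /= ne; case: (eqVneq k Phi) => [Ek|nk]; last by rewrite cnp // mul0r.
  subst k; have nvu : u != v by apply: contraNneq ne => ->.
  by rewrite /= (negbTE nvu) mulr0.
by move=> [k v]; case: (eqVneq k Phi) => [->|nk]; [exact: cp | exact: cnp].
Qed.

Section Final.
Variables (H : lgraph V) (R : {set elt V}) (X : {set V}).
Hypothesis Hsub1 : \bigcup_(x in X) zeta H x \subset R.
Hypothesis Hsub2 : R \subset [set (Phi, v) | v in ~: X] :|: \bigcup_(x in X) zeta H x.

Lemma finR_a w : w \in R -> w.1 != Phi -> exists2 x, x \in X & w = (ck H x, x).
Proof.
move=> /(subsetP Hsub2); rewrite inE => /orP [/imsetP [v _ ->]|]; first by rewrite eqxx.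
move=> /bigcupP [x xX]; rewrite zetaE !inE => /orP [/eqP ->|/imsetP [u _ ->]]; last by rewrite eqxx.
by move=> _; exists x.
Qed.

Lemma finR_b x : x \in X -> (ck H x, x) \in R.
Proof.
move=> xX; apply: (subsetP Hsub1); apply/bigcupP; exists x => //.
by rewrite zetaE setU11.
Qed.

Lemma finR_c x u : x \in X -> ladj H x u -> (Phi, u) \in R.
Proof.
move=> xX xu; apply: (subsetP Hsub1); apply/bigcupP; exists x => //.
rewrite zetaE inE; apply/orP; right; apply/imsetP; exists u => //; by rewrite inE.
Qed.

Lemma final_nullity : nullity H R = #|X|.
Proof.
set Y := [set v | (Phi, v) \in R].
pose B := [pred w : elt V | w.1 == Phi].
have cardP : #|[predI R & B]| = #|Y|.
  have inj1 : injective (fun v : V => (Phi, v)) by move=> a b [].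
  rewrite -(card_imset (pred_of_set Y) inj1); apply: eq_card => -[k v]; rewrite !inE /=.
  apply/andP/imsetP => [[vR /eqP Ek]|[u uY [-> ->]]]; last by rewrite inE in uY; rewrite uY eqxx.
  by subst k; exists v; rewrite // inE.
have cardN : #|[predD R & B]| = #|X|.
  have inj2 : injective (fun x : V => (ck H x, x)) by move=> a b [].
  rewrite -(card_imset (pred_of_set X) inj2); apply: eq_card => -[k v]; rewrite !inE /=.
  apply/andP/imsetP => [[nk vR]|[u uX [-> ->]]]; last by rewrite ck_neq finR_b.
  by have [x xX E] := finR_a vR nk; exists x.
have rk : mrank H R = #|Y|.
  apply/eqP; rewrite eqn_leq; apply/andP; split.
    apply/bigmax_leqP => T /andP [TR Tind]; apply: (indep_card Tind) => w u wT uY.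
    have wR := subsetP TR _ wT.
    case: (eqVneq w.1 Phi) => [Ew|nw].
      move: w Ew wR {wT} => [k v] /= -> vR.
      case: (eqVneq u v) => [E|] //; subst u; by rewrite inE vR in uY.
    have [x xX ->] := finR_a wR nw.
    case: (eqVneq u x) => [->|nux]; first exact: col_ck.
    rewrite IAScolE /ck; case: (lloop H x); rewrite /= (negbTE nux);
    case E: (ladj H u x) => //; rewrite (ladj_sym H) in E;
    by rewrite inE (finR_c xX E) in uY.
  rewrite -cardP.
  have -> : #|[predI R & B]| = #|[set w in R | w.1 == Phi]| by apply: eq_card => w; rewrite !inE.
  rewrite /mrank; apply: (@leq_bigmax_cond _ (fun T : {set elt V} => (T \subset R) && indep H T) (fun T => #|T|)); apply/andP; split.
    by apply/subsetP => w; rewrite inE => /andP [].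
  by apply: indep_phi => w; rewrite inE => /andP [_ /eqP].
by rewrite /nullity -(cardID B R) cardP cardN rk addKn.
Qed.
End Final.

Lemma st_eq (R : {set elt V}) w w' : subtransversal R -> w \in R -> w' \in R -> w.2 = w'.2 -> w = w'.
Proof.
move=> st wR w'R E; move: (st w.2) => /card_le1_eqP; apply; rewrite inE ?wR ?w'R ?E eqxx //.
Qed.

Lemma imset_sep (f : elt V -> elt V) (R : {set elt V}) (P : pred (elt V)) :
  injective f -> [set w in f @: R | P w] = f @: [set w in R | P (f w)].
Proof.
move=> finj; apply/setP => w; rewrite inE; apply/andP/imsetP.
- by move=> [/imsetP [x xR ->] Px]; exists x; rewrite // inE xR.
- by move=> [x]; rewrite inE => /andP [xR Px] ->; rewrite mem_imset.
Qed.

Lemma iso_props H (s : seq (locop * V)) : injective (induced_iso H s) /\ forall w, (induced_iso H s w).2 = w.2.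
Proof.
elim: s H => [|[o v] s IH] H /=; first by split.
have [inj2 snd2] := IH (apply_op o v H); split.
- move=> a b /inj2; exact: (inv_inj (step_inv o v H)).
- by move=> w; rewrite snd2 step_snd.
Qed.

Lemma st_map H s (R : {set elt V}) : subtransversal R -> subtransversal (induced_iso H s @: R).
Proof.
have [finj fsnd] := iso_props H s.
move=> st v; rewrite imset_sep // card_imset //.
by apply: leq_trans (st v); apply: subset_leq_card; apply/subsetP => w; rewrite !inE fsnd.
Qed.

Lemma ops_cat H s1 s2 : apply_ops H (s1 ++ s2) = apply_ops (apply_ops H s1) s2.
Proof. by rewrite /apply_ops foldl_cat. Qed.

Lemma iso_cat H s1 s2 w : induced_iso H (s1 ++ s2) w = induced_iso (apply_ops H s1) s2 (induced_iso H s1 w).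
Proof. by elim: s1 H w => [|[o v] s1 IH] H w //=; rewrite IH. Qed.

Lemma kind_cases G v k : [\/ k = Phi, k = ck G v | k = nck G v].
Proof. by rewrite /ck /nck; case: k; case: lloop; [apply: Or31|apply: Or31|apply: Or33|apply: Or32|apply: Or32|apply: Or33]. Qed.

Lemma ns_fix G v k x : x != v -> ns_exch G v (k, x) = (k, x).
Proof. by move=> nx; rewrite /ns_exch /swap_at; case: lloop; rewrite /= (negbTE nx). Qed.

Lemma ns_nck G v : ns_exch G v (nck G v, v) = (Phi, v).
Proof. by rewrite /ns_exch /swap_at /nck; case: lloop; rewrite /= eqxx !kind_eqE. Qed.

Lemma ns_ck G v : ns_exch G v (ck G v, v) = (ck G v, v).
Proof. by rewrite /ns_exch /swap_at /ck; case: lloop; rewrite /= eqxx !kind_eqE. Qed.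

Definition meas (R : {set elt V}) := #|[set w in R | w.1 != Phi]|.

Definition good H (R : {set elt V}) s :=
  exists X : {set V}, [/\ stable (apply_ops H s) X,
     \bigcup_(x in X) zeta (apply_ops H s) x \subset induced_iso H s @: R &
     induced_iso H s @: R \subset [set (Phi, v) | v in ~: X] :|: \bigcup_(x in X) zeta (apply_ops H s) x].

Lemma good_cat H (R : {set elt V}) s1 s2 : good (apply_ops H s1) (induced_iso H s1 @: R) s2 -> good H R (s1 ++ s2).
Proof.
have E : induced_iso H (s1 ++ s2) @: R = induced_iso (apply_ops H s1) s2 @: (induced_iso H s1 @: R).
  rewrite -imset_comp; apply: eq_imset => w; exact: iso_cat.
by rewrite /good ops_cat E.
Qed.

Lemma meas_lt H s (R : {set elt V}) w0 :
  w0 \in R -> w0.1 != Phi -> (induced_iso H s w0).1 = Phi ->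
  (forall w, w \in R -> w.1 = Phi -> (induced_iso H s w).1 = Phi) ->
  (meas (induced_iso H s @: R) < meas R)%N.
Proof.
have [finj _] := iso_props H s.
move=> w0R w0n w0f Hphi; rewrite /meas imset_sep // card_imset //.
apply: proper_card; apply/properP; split.
- apply/subsetP => w; rewrite !inE => /andP [wR nf]; rewrite wR /=.
  by apply: contra nf => /eqP /(Hphi _ wR) ->.
- by exists w0; rewrite !inE ?w0R ?w0n ?w0f ?eqxx.
Qed.

Lemma nck_neq G u : (nck G u == Phi) = false.
Proof. by rewrite /nck; case: lloop; rewrite kind_eqE. Qed.

Lemma progress H (R : {set elt V}) : subtransversal R ->
  good H R [::] \/ exists s1, (meas (induced_iso H s1 @: R) < meas R)%N.
Proof.
move=> st.
case: (boolP [exists u, (nck H u, u) \in R]) => [/existsP [u uR] | nA].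
  right; exists [:: (Ons, u)]; apply: (@meas_lt _ _ _ (nck H u, u)) => //=.
  - by rewrite nck_neq.
  - by rewrite /step_iso ns_nck.
  move=> [k x] xR /= Ek; subst k; rewrite /step_iso.
  case: (eqVneq x u) => [Exu|nxu]; last by rewrite ns_fix.
  subst x; have := st_eq st xR uR erefl; case=> /esym /eqP; by rewrite nck_neq.
case: (boolP [exists u, exists w, [&& (ck H u, u) \in R, ladj H u w, (Phi, w) \notin R & (nck H w, w) \notin R]])
  => [/existsP [u /existsP [w /and4P [uR uw wP wN]]] | nB].
  right; exists [:: (Ons, w); (Ons, u)].
  have nuw : u != w by apply: contraTneq uw => ->; rewrite ladjxx.
  apply: (@meas_lt _ _ _ (ck H u, u)) => //=.
  - by rewrite ck_neq.
  - rewrite /step_iso ns_fix //.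
    have -> : ck H u = nck (loc_ns w H) u by rewrite /ck /nck /= (ladj_sym H w u) uw; case: lloop.
    by rewrite ns_nck.
  move=> [k x] xR /= Ek; subst k; rewrite /step_iso.
  case: (eqVneq x w) => [Exw|nxw]; first by subst x; rewrite xR in wP.
  rewrite ns_fix //.
  case: (eqVneq x u) => [Exu|nxu]; last by rewrite ns_fix.
  subst x; have := st_eq st xR uR erefl; case=> /esym /eqP; by rewrite ck_neq.
left.
have hA : forall u, (nck H u, u) \notin R by move/existsPn: nA.
have hB : forall u w, (ck H u, u) \in R -> ladj H u w -> (Phi, w) \in R.
  move=> u w uR uw; apply/negPn/negP => wP.
  by move: nB => /existsPn/(_ u)/existsPn/(_ w); rewrite uR uw wP hA.
exists [set u | (ck H u, u) \in R]; rewrite /= imset_id; split.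
- move=> x y; rewrite !inE => xR yR; apply/negP => xy.
  have := st_eq st (hB _ _ xR xy) yR erefl; case=> /eqP; by rewrite eq_sym ck_neq.
- apply/bigcupsP => x; rewrite inE => xR; rewrite zetaE subUset sub1set xR /=.
  by apply/subsetP => w /imsetP [y]; rewrite inE => xy ->; apply: hB xy.
- apply/subsetP => -[k v] vR; rewrite inE; have [Ek|Ek|Ek] := kind_cases H v k; subst k.
  + apply/orP; left; apply/imsetP; exists v => //; rewrite !inE; apply/negP => vX.
    have := st_eq st vR vX erefl; case=> /esym /eqP; by rewrite ck_neq.
  + apply/orP; right; apply/bigcupP; exists v; first by rewrite inE.
    by rewrite zetaE setU11.
  + by move: (hA v); rewrite vR.
Qed.

Lemma algo n H (R : {set elt V}) : (meas R <= n)%N -> subtransversal R -> exists s, good H R s.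
Proof.
elim: n H R => [|n IH] H R Hm st; case: (progress H st) => [g|[s1 Hs1]].
- by exists [::].
- by move: (leq_trans Hs1 Hm).
- by exists [::].
have [s2 g2] := IH (apply_ops H s1) (induced_iso H s1 @: R) (leq_trans Hs1 Hm) (st_map H s1 st).
by exists (s1 ++ s2); apply: good_cat.
Qed.
End S.

Unset Implicit Arguments.
Close Scope ring_scope.

Theorem corollary4p4 (V : finType) (G : lgraph V) (S : {set elt V}) (nu : nat) :
  subtransversal S ->
  (nu = nullity G S <->
   exists (H : lgraph V) (s : seq (locop * V)),
     apply_ops G s = H /\
     exists X : {set V},
       [/\ stable H X, #|X| = nu,
        \bigcup_(x in X) zeta H x \subset induced_iso G s @: S &
        induced_iso G s @: S \subset
          [set (Phi, v) | v in ~: X] :|: \bigcup_(x in X) zeta H x]).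
Proof.
move=> st; split.
- move=> ->; have [s [X [Hs H1 H2]]] := algo G (leqnn (meas S)) st.
  exists (apply_ops G s), s; split => //; exists X; split => //.
  by rewrite -(nullity_ops G s S) (final_nullity H1 H2).
- move=> [H [s [<- [X [_ HX H1 H2]]]]].
  by rewrite -HX -(nullity_ops G s S) (final_nullity H1 H2).
Qed.
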